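(* Let $\theta\in[\frac{\pi}{2},\frac{2\pi}{3}]$ and $z=e^{i\theta}$, and let $D=\{\tau\in\mathbb{H}:|\operatorname{Re}\tau|\le\frac12,\ \operatorname{Im}\tau>\frac25\}$. If $\tau\in D$ and $\tau=\gamma.z$ for some $\gamma\in\mathrm{PSL}_2(\mathbb{Z})$ (acting by Möbius transformations), then $\tau\in\{z,\,-1/z,\,\frac{-1}{z+1},\,\frac{z}{z+1},\,\frac{-1}{z-1},\,\frac{-z}{z-1}\}$.
   Context: $\mathbb{H}$ is the upper half plane; $\begin{pmatrix}a&b\\c&d\end{pmatrix}\in\mathrm{PSL}_2(\mathbb{Z})$ acts by $\tau\mapsto\frac{a\tau+b}{c\tau+d}$. *)

(* Defs.v *)
From Stdlib Require Import Reals ZArith.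
From Coquelicot Require Import Coquelicot.
Open Scope R_scope.

Definition in_H (t : C) : Prop := 0 < Im t.

Definition in_D (t : C) : Prop :=
  in_H t /\ Rabs (Re t) <= 1/2 /\ 2/5 < Im t.

(* Elements of PSL_2(Z) are represented by integer matrices (a b; c d) with
   a d - b c = 1 (i.e. elements of SL_2(Z)); +-gamma act identically. *)
Definition in_SL2Z (a b c d : Z) : Prop := (a * d - b * c = 1)%Z.

Definition mobius (a b c d : Z) (t : C) : C :=
  Cdiv (Cplus (Cmult (RtoC (IZR a)) t) (RtoC (IZR b)))
       (Cplus (Cmult (RtoC (IZR c)) t) (RtoC (IZR d))).

Definition expi (th : R) : C := (cos th, sin th).

(* Main.v *)
Require Import Defs.
From Stdlib Require Import Reals ZArith Lra Lia.
From Coquelicot Require Import Coquelicot.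
Open Scope R_scope.

Lemma mob_comp (A B Cc Dd x y : R) :
  x*x+y*y = 1 ->
  0 < Cc*Cc + 2*Cc*Dd*x + Dd*Dd ->
  let t := Cdiv (Cplus (Cmult (RtoC A) (x,y)) (RtoC B)) (Cplus (Cmult (RtoC Cc) (x,y)) (RtoC Dd)) in
  fst t = (A*Cc + (A*Dd+B*Cc)*x + B*Dd)/(Cc*Cc + 2*Cc*Dd*x + Dd*Dd) /\
  snd t = (A*Dd-B*Cc)*y/(Cc*Cc + 2*Cc*Dd*x + Dd*Dd).
Proof.
  intros Hxy HN t.
  assert (E : (Cc * x - 0 * y + Dd) * ((Cc * x - 0 * y + Dd) * 1) +
   (Cc * y + 0 * x + 0) * ((Cc * y + 0 * x + 0) * 1)
              = Cc*Cc + 2*Cc*Dd*x + Dd*Dd).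
  { replace ((Cc * x - 0 * y + Dd) * ((Cc * x - 0 * y + Dd) * 1) +
   (Cc * y + 0 * x + 0) * ((Cc * y + 0 * x + 0) * 1))
      with (Cc*Cc*(x*x+y*y) + 2*Cc*Dd*x + Dd*Dd) by ring. rewrite Hxy. ring. }
  unfold t, Cdiv, Cinv, Cmult, Cplus, RtoC; simpl.
  rewrite E. split; field_simplify_eq; try lra.
  replace (A * x ^ 2 * Cc + A * x * Dd + A * y ^ 2 * Cc) with (A*Cc*(x*x+y*y) + A*x*Dd) by ring.
  rewrite Hxy. ring.
Qed.

Ltac nz := let H := fresh in intro H;
  first [ apply (f_equal snd) in H; simpl in H; lra
        | apply (f_equal fst) in H; simpl in H; lra ].

Theorem lemma3p8 (theta : R) (tau : C) :
  PI / 2 <= theta <= 2 * PI / 3 ->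
  in_D tau ->
  (exists a b c d : Z, in_SL2Z a b c d /\ tau = mobius a b c d (expi theta)) ->
  let z := expi theta in
  tau = z \/
  tau = Cdiv (RtoC (-1)) z \/
  tau = Cdiv (RtoC (-1)) (Cplus z (RtoC 1)) \/
  tau = Cdiv z (Cplus z (RtoC 1)) \/
  tau = Cdiv (RtoC (-1)) (Cminus z (RtoC 1)) \/
  tau = Cdiv (Copp z) (Cminus z (RtoC 1)).
Proof.
  intros Hth [_ [Hre Him]] [a [b [c [d [Hdet Ht]]]]].
  cbv zeta.
  pose proof PI_RGT_0 as HPI.
  assert (Hx0 : cos theta <= 0) by (apply cos_le_0; lra).
  assert (Hx1 : -1/2 <= cos theta).
  { destruct (Req_dec theta (2*PI/3)) as [E|E].
    - rewrite E. replace (2*PI/3) with (2*(PI/3)) by field. rewrite cos_2PI3. lra.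
    - assert (cos (2*PI/3) < cos theta) by (apply cos_decreasing_1; lra).
      replace (2*PI/3) with (2*(PI/3)) in H by field. rewrite cos_2PI3 in H. lra. }
  assert (Hy0 : 0 < sin theta) by (apply sin_gt_0; lra).
  assert (Hy1 : sin theta <= 1) by apply (proj2 (SIN_bound theta)).
  assert (Hxy : cos theta * cos theta + sin theta * sin theta = 1).
  { pose proof (sin2_cos2 theta) as E. unfold Rsqr in E. lra. }
  unfold mobius, expi in *.
  set (x := cos theta) in *. set (y := sin theta) in *.
  assert (Hdr : IZR a * IZR d - IZR b * IZR c = 1).
  { rewrite <- !mult_IZR, <- minus_IZR, Hdet. reflexivity. }
  assert (HN : 0 < IZR c * IZR c + 2 * IZR c * IZR d * x + IZR d * IZR d).
  { destruct (Z.eq_dec c 0) as [Ec|Ec].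
    - subst c. assert (d <> 0%Z) by (unfold in_SL2Z in Hdet; lia).
      assert (IZR d <> 0) by (apply not_0_IZR; auto).
      assert (0 < IZR d * IZR d) by (apply Rsqr_pos_lt; auto). lra.
    - assert (IZR c <> 0) by (apply not_0_IZR; auto).
      assert (0 < IZR c * IZR c) by (apply Rsqr_pos_lt; auto).
      assert (0 < IZR c * IZR c * (y * y)) by (apply Rmult_lt_0_compat; nra).
      replace (IZR c * IZR c + 2 * IZR c * IZR d * x + IZR d * IZR d)
        with ((IZR c * x + IZR d) * (IZR c * x + IZR d) + IZR c * IZR c * (y*y))
        by (transitivity (IZR c * IZR c * (x*x+y*y) + 2 * IZR c * IZR d * x + IZR d * IZR d);
            [ring | rewrite Hxy; ring]).
      pose proof (Rle_0_sqr (IZR c * x + IZR d)) as Q. unfold Rsqr in Q. lra. }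
  pose proof (mob_comp (IZR a) (IZR b) (IZR c) (IZR d) x y Hxy HN) as Hc.
  cbv zeta in Hc. rewrite <- Ht in Hc. destruct Hc as [Hu Hv].
  rewrite Hdr in Hv.
  unfold Re, Im in *.
  assert (Hu2 : -1/2 <= fst tau <= 1/2).
  { pose proof (Rle_abs (fst tau)). pose proof (Rle_abs (- fst tau)).
    rewrite Rabs_Ropp in *. lra. }
  clear Hre.
  set (N := IZR c * IZR c + 2 * IZR c * IZR d * x + IZR d * IZR d) in *.
  assert (HN5 : N < 5/2).
  { assert (E : snd tau * N = y) by (rewrite Hv; field; lra). nra. }
  assert (Hcd : (-1 <= c <= 1 /\ -1 <= d <= 1)%Z).
  { destruct (Z_le_gt_dec 0 (c*d)) as [L|L].
    - assert (0 <= IZR c * IZR d) by (rewrite <- mult_IZR; apply IZR_le; auto).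
      assert (IZR c * IZR c + IZR d * IZR d - IZR c * IZR d <= N) by (unfold N; nra).
      assert (2*(c*c+d*d-c*d) < 5)%Z.
      { apply lt_IZR. rewrite !mult_IZR, !minus_IZR, !plus_IZR, !mult_IZR. lra. }
      nia.
    - assert (IZR c * IZR d < 0) by (rewrite <- mult_IZR; apply IZR_lt; lia).
      assert (IZR c * IZR c + IZR d * IZR d <= N) by (unfold N; nra).
      assert (2*(c*c+d*d) < 5)%Z.
      { apply lt_IZR. rewrite !mult_IZR, !plus_IZR, !mult_IZR. lra. }
      nia. }
  unfold in_SL2Z in Hdet.
  assert (Hc3 : (c = -1 \/ c = 0 \/ c = 1)%Z) by lia.
  assert (Hd3 : (d = -1 \/ d = 0 \/ d = 1)%Z) by lia.
  clear Hcd HN5 Hdr.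
  destruct tau as [u v]. simpl in Hu, Hv, Hu2.
  destruct Hc3 as [Ec|[Ec|Ec]]; destruct Hd3 as [Ed|[Ed|Ed]]; subst c d; unfold N in *.
  - assert (Eb : IZR b = IZR a + 1) by (rewrite <- ?opp_IZR, <- ?plus_IZR, <- ?minus_IZR; apply IZR_eq; lia).
    assert (Eu : u = - IZR a - 1/2) by (rewrite Hu, Eb; field; lra).
    assert (Ha : (-2 < a < 1)%Z) by (split; apply lt_IZR; lra).
    assert (Ha2 : (a = -1 \/ a = 0)%Z) by lia.
    destruct Ha2 as [-> | ->]; [assert (b = 0)%Z by lia | assert (b = 1)%Z by lia]; subst b.
    + right; right; right; left; rewrite Ht; field; repeat split; nz.
    + right; right; left; rewrite Ht; field; repeat split; nz.
  - assert (b = 1)%Z by lia. subst b.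
    assert (Eu : u = - IZR a - x) by (rewrite Hu; field).
    assert (Ev : v = y) by (rewrite Hv; field).
    assert (Hb : (-1 < a < 2)%Z) by (split; apply lt_IZR; lra).
    assert (Hb2 : (a = 0 \/ a = 1)%Z) by lia.
    destruct Hb2 as [-> | ->].
    + right; left; rewrite Ht; field; repeat split; nz.
    +
      assert (Ex : x = -1/2) by lra.
      left. f_equal; lra.
  - assert (Eb : IZR b = 1 - IZR a) by (rewrite <- ?opp_IZR, <- ?plus_IZR, <- ?minus_IZR; apply IZR_eq; lia).
    assert (Eu : u = - IZR a + 1/2) by (rewrite Hu, Eb; field; lra).
    assert (Ha : (-1 < a < 2)%Z) by (split; apply lt_IZR; lra).
    assert (Ha2 : (a = 0 \/ a = 1)%Z) by lia.
    destruct Ha2 as [-> | ->]; [assert (b = 1)%Z by lia | assert (b = 0)%Z by lia]; subst b.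
    + right; right; right; right; left; rewrite Ht; field; repeat split; nz.
    + right; right; right; right; right; rewrite Ht; field; repeat split; nz.
  - assert (a = -1)%Z by lia. subst a.
    assert (Eu : u = x - IZR b) by (rewrite Hu; field).
    assert (Ev : v = y) by (rewrite Hv; field).
    assert (Hb : (-2 < b < 1)%Z) by (split; apply lt_IZR; lra).
    assert (Hb2 : (b = 0 \/ b = -1)%Z) by lia.
    destruct Hb2 as [-> | ->].
    + left; rewrite Ht; field; repeat split; nz.
    +
      assert (Ex : x = -1/2) by lra.
      right; left. unfold Cdiv, Cinv, Cmult, RtoC; simpl.
      assert (E2 : x * (x * 1) + y * (y * 1) = 1) by (transitivity (x*x+y*y); [ring | exact Hxy]).
      rewrite E2. f_equal; field_simplify; lra.
  - lia.
  - assert (a = 1)%Z by lia. subst a.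
    assert (Eu : u = x + IZR b) by (rewrite Hu; field).
    assert (Ev : v = y) by (rewrite Hv; field).
    assert (Hb : (-1 < b < 2)%Z) by (split; apply lt_IZR; lra).
    assert (Hb2 : (b = 0 \/ b = 1)%Z) by lia.
    destruct Hb2 as [-> | ->].
    + left; rewrite Ht; field; repeat split; nz.
    +
      assert (Ex : x = -1/2) by lra.
      right; left. unfold Cdiv, Cinv, Cmult, RtoC; simpl.
      assert (E2 : x * (x * 1) + y * (y * 1) = 1) by (transitivity (x*x+y*y); [ring | exact Hxy]).
      rewrite E2. f_equal; field_simplify; lra.
  - assert (Eb : IZR b = - IZR a - 1) by (rewrite <- ?opp_IZR, <- ?plus_IZR, <- ?minus_IZR; apply IZR_eq; lia).
    assert (Eu : u = IZR a + 1/2) by (rewrite Hu, Eb; field; lra).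
    assert (Ha : (-2 < a < 1)%Z) by (split; apply lt_IZR; lra).
    assert (Ha2 : (a = -1 \/ a = 0)%Z) by lia.
    destruct Ha2 as [-> | ->]; [assert (b = 0)%Z by lia | assert (b = -1)%Z by lia]; subst b.
    + right; right; right; right; right; rewrite Ht; field; repeat split; nz.
    + right; right; right; right; left; rewrite Ht; field; repeat split; nz.
  - assert (b = -1)%Z by lia. subst b.
    assert (Eu : u = IZR a - x) by (rewrite Hu; field).
    assert (Ev : v = y) by (rewrite Hv; field).
    assert (Hb : (-2 < a < 1)%Z) by (split; apply lt_IZR; lra).
    assert (Hb2 : (a = 0 \/ a = -1)%Z) by lia.
    destruct Hb2 as [-> | ->].
    + right; left; rewrite Ht; field; repeat split; nz.
    +
      assert (Ex : x = -1/2) by lra.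
      left. f_equal; lra.
  - assert (Eb : IZR b = IZR a - 1) by (rewrite <- ?opp_IZR, <- ?plus_IZR, <- ?minus_IZR; apply IZR_eq; lia).
    assert (Eu : u = IZR a - 1/2) by (rewrite Hu, Eb; field; lra).
    assert (Ha : (-1 < a < 2)%Z) by (split; apply lt_IZR; lra).
    assert (Ha2 : (a = 0 \/ a = 1)%Z) by lia.
    destruct Ha2 as [-> | ->]; [assert (b = -1)%Z by lia | assert (b = 0)%Z by lia]; subst b.
    + right; right; left; rewrite Ht; field; repeat split; nz.
    + right; right; right; left; rewrite Ht; field; repeat split; nz.
Qed.
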